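(* Let $a,b,k$ be positive integers. If the player cannot win the $(a,b)$-game, then the player cannot win the $(ak,b)$-game.
   Context: The $(n,m)$-game: $n$ counters at positions $1,\dots,n$ (vertices in cyclic order of a regular $n$-gon table), each showing an element of $\mathbb{Z}_m$; a configuration is a vector in $\mathbb{Z}_m^n$, initially arbitrary and unknown. Each turn the player chooses a move $y\in\mathbb{Z}_m^n$ added coordinatewise, then the table is rotated by an adversarially chosen $k\in\mathbb{Z}_n$, replacing $x$ by $x'$ with $x'_{i+k}=x_i$ (indices mod $n$). The player wins if at some moment (including initially) all counters show $0$. A strategy is a finite sequence of moves; it is winning if it forces the zero configuration at some time for every initial configuration and every choice of rotations. ''The player can win'' means a winning finite sequence exists. *)

(* Defs.v *)
From mathcomp Require Import all_boot.
Set Implicit Arguments. Unset Strict Implicit. Unset Printing Implicit Defensive.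

(* Positions are 'I_n (position i+1 of the paper is i here),
   counter values are 'I_m, read as Z_m (arithmetic modulo m).
   We need 0 < n and 0 < m to build ordinals by reduction modulo. *)

Definition modord (p : nat) (Hp : 0 < p) (x : nat) : 'I_p :=
  Ordinal (ltn_pmod x Hp).

Section Game.
Variables (n m : nat) (Hn : 0 < n) (Hm : 0 < m).

Definition config := 'I_n -> 'I_m.

Definition add_move (x y : config) : config :=
  fun i => modord Hm (x i + y i).

(* rotation by k: x'_{i+k} = x_i, i.e. x'_j = x_{j-k} (indices mod n) *)
Definition rotate (k : 'I_n) (x : config) : config :=
  fun j => x (modord Hn (j + (n - k))).

Definition turn (x y : config) (k : 'I_n) : config := rotate k (add_move x y).

Definition is_zero (x : config) : Prop := forall i, val (x i) = 0.

Fixpoint play (x : config) (ys : seq config) (ks : seq 'I_n) : seq config :=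
  match ys, ks with
  | y :: ys', k :: ks' => x :: play (turn x y k) ys' ks'
  | _, _ => [:: x]
  end.

Definition winning (ys : seq config) : Prop :=
  forall (x0 : config) (ks : seq 'I_n), size ks = size ys ->
    exists2 t, t < size (play x0 ys ks) & is_zero (nth x0 (play x0 ys ks) t).

Definition can_win : Prop := exists ys : seq config, winning ys.

End Game.

Lemma mul_pos (a k : nat) : 0 < a -> 0 < k -> 0 < a * k.
Proof. by move=> Ha Hk; rewrite muln_gt0 Ha Hk. Qed.

(* Main.v *)
Require Import Defs.
From mathcomp Require Import all_boot.
From mathcomp Require Import zify.
Set Implicit Arguments. Unset Strict Implicit. Unset Printing Implicit Defensive.

Section S.
Variables (a b k : nat) (Ha : 0 < a) (Hb : 0 < b) (Hk : 0 < k).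
Let Hn := mul_pos Ha Hk.
Let N := a * k.
Lemma aleN : a <= a * k.
Proof. by rewrite leq_pmulr. Qed.

Definition sig (X : config (a*k) b) : config a b :=
  fun j => modord Hb (\sum_(i < a*k | i %% a == j) X i).

Definition rel (X : config (a*k) b) (x : config a b) :=
  forall j, val (sig X j) = val (x j).

Lemma sig_add X Y j :
  val (sig (add_move Hb X Y) j) = val (add_move Hb (sig X) (sig Y) j).
Proof.
rewrite /sig /add_move /=.
rewrite modn_summ modnDm big_split /=.
by [].
Qed.

Definition liftr (r : 'I_a) : 'I_(a*k) := Ordinal (leq_trans (ltn_ord r) aleN).

Lemma sig_rot X (r : 'I_a) j :
  val (sig (rotate Hn (liftr r) X) j) = val (rotate Ha r (sig X) j).
Proof.
rewrite /sig /rotate /=.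
set h := fun i : 'I_(a*k) => modord Hn (i + (a * k - r)).
have hinj : injective h.
  move=> x y /(congr1 val) /= /eqP.
  rewrite eqn_modDr => /eqP.
  rewrite !modn_small // => e; exact: val_inj.
rewrite [in RHS](reindex_inj hinj) /=.
congr (_ %% _); apply: eq_bigl => i /=.
rewrite (modn_dvdm _ (dvdn_mulr k (dvdnn a))).
have rle : r <= a := ltnW (ltn_ord r).
have -> : a * k - r = (a - r) + a * (k.-1).
  have : a * k = a * k.-1 + a by rewrite -mulnSr prednK.
  move=> ->; move: (a * k.-1) => m; lia.
have EE : forall x, (x + a * k.-1) %% a = x %% a.
  by move=> x; rewrite addnC mulnC modnMDl.
rewrite addnA EE.
apply/idP/idP => /eqP H.
  by rewrite -H modnDml.
apply/eqP; rewrite -(modn_small (ltn_ord j)); apply/eqP.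
by rewrite -(eqn_modDr (a - r)) H.
Qed.

Lemma rel_turn X Y x r : rel X x ->
  rel (turn Hn Hb X Y (liftr r)) (turn Ha Hb x (sig Y) r).
Proof.
move=> H j; rewrite /turn sig_rot.
rewrite /rotate. rewrite sig_add. rewrite /add_move /=.
by have := H (modord Ha (j + (a - r))); rewrite /sig /= => ->.
Qed.

Lemma rel_zero X x : rel X x -> is_zero X -> is_zero x.
Proof.
move=> H Z j; rewrite -H /sig /=.
rewrite big1 ?mod0n // => i _.
exact: Z i.
Qed.

Lemma play_rel Ys ks X x : rel X x ->
  size (play Hn Hb X Ys (map liftr ks)) = size (play Ha Hb x (map sig Ys) ks) /\
  forall t, t < size (play Hn Hb X Ys (map liftr ks)) ->
    rel (nth X (play Hn Hb X Ys (map liftr ks)) t) (nth x (play Ha Hb x (map sig Ys) ks) t).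
Proof.
elim: Ys ks X x => [|Y Ys IH] [|r ks] X x H /=; try by split => // [[|t]].
have [E1 E2] := IH ks _ _ (rel_turn Y r H).
split; first by rewrite E1.
move=> [|t] //= Ht.
rewrite (set_nth_default (turn Hn Hb X Y (liftr r))) //.
rewrite (set_nth_default (turn Ha Hb x (sig Y) r)) -?E1 //.
exact: E2.
Qed.

Definition X0 (x0 : config a b) : config (a*k) b :=
  fun i => if val i < a then x0 (modord Ha i) else modord Hb 0.

Lemma rel_X0 x0 : rel (X0 x0) x0.
Proof.
move=> j; rewrite /sig /=.
rewrite (bigD1 (liftr j)) /=; last by rewrite modn_small.
rewrite big1 ?addn0.
  rewrite /X0 /= ltn_ord modn_small //.
  have -> : modord Ha j = j by apply: val_inj; rewrite /= modn_small.
  by [].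
move=> i /andP [Hi Hne]; rewrite /X0.
case: ifP => Hia.
  move: Hi; rewrite modn_small // => Hi.
  by move: Hne; rewrite -(inj_eq val_inj) /= Hi.
by rewrite /= mod0n.
Qed.
End S.

Theorem lemma3p1 (a b k : nat) (Ha : 0 < a) (Hb : 0 < b) (Hk : 0 < k) :
  ~ can_win Ha Hb -> ~ can_win (mul_pos Ha Hk) Hb.
Proof.
move=> Hnot [Ys HY]; apply: Hnot.
exists (map (@sig a b k Hb) Ys) => x0 ks Hs.
have [Hsz Hrel] := play_rel Ha Hk Ys ks (rel_X0 Ha Hb Hk x0).
have Hs' : size (map (liftr Hk) ks) = size Ys by rewrite size_map Hs size_map.
have [t Ht Hz] := HY (@X0 a b k Ha Hb x0) (map (liftr Hk) ks) Hs'.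
exists t; first by rewrite -Hsz.
exact: rel_zero (Hrel t Ht) Hz.
Qed.
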